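(* Let $V$ be a real inner product space with induced norm $\lVert\cdot\rVert$. Let $a,b,a',b'\in V$ and $\gamma\ge0$ satisfy \[ \max\{\lVert x-y\rVert : x,y\in\{a,b,a',b'\}\}\le\gamma\le \lVert a-b\rVert+\lVert a'-b'\rVert . \] Then, with $m=(a+b)/2$ and $m'=(a'+b')/2$, we have $\lVert m-m'\rVert\le\sqrt{\tfrac78}\,\gamma$. *)

(* Defs.v *)
From mathcomp Require Import all_boot all_order all_algebra.
From mathcomp Require Import reals.
Set Implicit Arguments. Unset Strict Implicit. Unset Printing Implicit Defensive.
Import Order.TTheory GRing.Theory Num.Theory.
Local Open Scope ring_scope.

Definition is_inner_product (R : realType) (V : lmodType R) (ip : V -> V -> R) : Prop :=
  [/\ (forall x y, ip x y = ip y x),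
      (forall c x y z, ip (c *: x + y) z = c * ip x z + ip y z),
      (forall x, 0 <= ip x x) &
      (forall x, ip x x = 0 -> x = 0)].

Definition ipnorm (R : realType) (V : lmodType R) (ip : V -> V -> R) (x : V) : R :=
  Num.sqrt (ip x x).

(* Main.v *)
Require Import Defs.
From mathcomp Require Import all_boot all_order all_algebra.
From mathcomp Require Import reals.
From mathcomp Require Import lra.
Import Order.TTheory GRing.Theory Num.Theory.
Local Open Scope ring_scope.
Set Implicit Arguments.

Section IP.
Variables (R : realType) (V : lmodType R) (ip : V -> V -> R).
Hypothesis Hip : is_inner_product ip.

Lemma ip0l z : ip 0 z = 0.
Proof.
case: Hip => _ Hl _ _.
have := Hl 1 0 0 z; rewrite scale1r !addr0 mul1r => h; lra.
Qed.

Lemma ipZl c x z : ip (c *: x) z = c * ip x z.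
Proof. case: Hip => _ Hl _ _. by have := Hl c x 0 z; rewrite addr0 ip0l addr0. Qed.

Lemma ipDl x y z : ip (x + y) z = ip x z + ip y z.
Proof. case: Hip => _ Hl _ _. by have := Hl 1 x y z; rewrite scale1r mul1r. Qed.

Lemma ipNl x z : ip (- x) z = - ip x z.
Proof. by rewrite -scaleN1r ipZl mulN1r. Qed.

Lemma ipDr x y z : ip z (x + y) = ip z x + ip z y.
Proof. case: Hip => Hs _ _ _. by rewrite Hs ipDl (Hs x) (Hs y). Qed.

Lemma ipNr x z : ip z (- x) = - ip z x.
Proof. case: Hip => Hs _ _ _. by rewrite Hs ipNl Hs. Qed.

Lemma ipZr c x z : ip z (c *: x) = c * ip z x.
Proof. case: Hip => Hs _ _ _. by rewrite Hs ipZl Hs. Qed.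

Lemma paral x y : ip (x + y) (x + y) + ip (x - y) (x - y) = 2 * ip x x + 2 * ip y y.
Proof.
case: Hip => Hs _ _ _.
rewrite !ipDl !ipDr !ipNl !ipNr (Hs y x); lra.
Qed.

Lemma sqZ c x : ip (c *: x) (c *: x) = c ^+ 2 * ip x x.
Proof. by rewrite ipZl ipZr mulrA expr2. Qed.

Lemma sq_norm x : ipnorm ip x ^+ 2 = ip x x.
Proof. case: Hip => _ _ Hp _. by rewrite /ipnorm sqr_sqrtr. Qed.

Lemma norm_ge0 x : 0 <= ipnorm ip x.
Proof. exact: sqrtr_ge0. Qed.
End IP.

Theorem lemma2 (R : realType) (V : lmodType R) (ip : V -> V -> R)
  (Hip : is_inner_product ip) (a b a' b' : V) (gamma : R)
  (Hg0 : 0 <= gamma)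
  (Hmax : forall x y, x \in [:: a; b; a'; b'] -> y \in [:: a; b; a'; b'] ->
            ipnorm ip (x - y) <= gamma)
  (Hsum : gamma <= ipnorm ip (a - b) + ipnorm ip (a' - b')) :
  ipnorm ip ((2 : R)^-1 *: (a + b) - (2 : R)^-1 *: (a' + b'))
    <= Num.sqrt (7%:R / 8%:R) * gamma.
Proof.
have sqle : forall x y, x \in [:: a; b; a'; b'] -> y \in [:: a; b; a'; b'] ->
    ip (x - y) (x - y) <= gamma ^+ 2.
  move=> x y Hx Hy; rewrite -(sq_norm Hip) lerXn2r ?nnegrE ?norm_ge0 //.
  exact: Hmax.
have h1 : ip (a - a') (a - a') <= gamma ^+ 2 by apply: sqle; rewrite !inE eqxx ?orbT.
have h2 : ip (b - b') (b - b') <= gamma ^+ 2 by apply: sqle; rewrite !inE eqxx ?orbT.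
have h3 : ip (a - b') (a - b') <= gamma ^+ 2 by apply: sqle; rewrite !inE eqxx ?orbT.
have h4 : ip (b - a') (b - a') <= gamma ^+ 2 by apply: sqle; rewrite !inE eqxx ?orbT.
set D := (a + b) - (a' + b').
have eD : (2 : R)^-1 *: (a + b) - (2 : R)^-1 *: (a' + b') = (2 : R)^-1 *: D.
  by rewrite /D scalerBr.
have p1 := paral Hip (a - a') (b - b').
have p2 := paral Hip (a - b') (b - a').
set u := a - b. set v := a' - b'.
have e1 : a - a' + (b - b') = D by rewrite /D opprD addrACA.
have e2 : a - b' + (b - a') = D by rewrite /D opprD [- a' - b']addrC addrACA.
have e3 : a - a' - (b - b') = u - v.
  by rewrite /u /v !opprB addrACA [RHS]addrACA [- b + _]addrC.
have e4 : a - b' - (b - a') = u + v.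
  by rewrite /u /v !opprB addrACA [RHS]addrACA [- b + _]addrC.
rewrite e1 e3 in p1. rewrite e2 e4 in p2.
have p3 := paral Hip u v.
have hu := sq_norm Hip u. have hv := sq_norm Hip v.
have nu : 0 <= ipnorm ip u by exact: sqrtr_ge0. have nv : 0 <= ipnorm ip v by exact: sqrtr_ge0.
have hg2 : gamma ^+ 2 <= 2 * (ipnorm ip u ^+ 2 + ipnorm ip v ^+ 2).
  move: Hsum nu nv; rewrite -/u -/v; set P := ipnorm ip u; set Q := ipnorm ip v => Hs nu nv.
  have h : gamma ^+ 2 <= (P + Q) ^+ 2 by rewrite lerXn2r ?nnegrE //; lra.
  have h' : 0 <= (P - Q) ^+ 2 by apply: sqr_ge0.
  apply: (le_trans h); clear -h'; move: h'; rewrite sqrrB sqrrD; lra.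
rewrite hu hv in hg2.
have hD : ip D D <= 7%:R / 2%:R * gamma ^+ 2.
  clear -p1 p2 p3 h1 h2 h3 h4 hg2. lra.
rewrite eD /ipnorm sqZ // -(ger0_norm Hg0) -sqrtr_sqr -sqrtrM; last first.
  by rewrite divr_ge0 ?ler0n.
apply: ler_wsqrtr.
clear -hD. rewrite expr2 in hD *. lra.
Qed.
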